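(* Let $G\subset\mathbb{R}^2$ be (the open domain bounded by) a convex polygon with smallest inner angle $\alpha\in(0,\pi)$. Then \[ A_G\ge 1+\frac{1}{\sin\frac{\alpha}{2}}. \]
   Context: For a domain $G\subsetneq\mathbb{R}^n$ let $d_G(x)=d(x,\partial G)$. The quasihyperbolic distance is $k_G(x,y)=\inf_\gamma\int_\gamma\frac{|dx|}{d_G(x)}$ over rectifiable curves $\gamma\subset G$ joining $x$ and $y$. The distance ratio metric is $j_G(x,y)=\log\left(1+\frac{|x-y|}{\min\{d_G(x),d_G(y)\}}\right)$. The uniformity constant is $A_G=\inf\{A\ge1: k_G(x,y)\le A\,j_G(x,y)\text{ for all }x,y\in G\}$ (with $\inf\emptyset=+\infty$). *)

(* Defs.v *)
From Stdlib Require Import Reals Lra Classical ClassicalEpsilon.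
Open Scope R_scope.

Definition pt : Type := (R * R)%type.
Definition psub (p q : pt) : pt := (fst p - fst q, snd p - snd q).
Definition pnorm (p : pt) : R := sqrt (fst p ^ 2 + snd p ^ 2).
Definition pdist (p q : pt) : R := pnorm (psub p q).
Definition pdot (p q : pt) : R := fst p * fst q + snd p * snd q.
Definition pcross (p q : pt) : R := fst p * snd q - snd p * fst q.

(** * Supremum / infimum of a set of reals (0 if it does not exist) *)
Definition Rsup (E : R -> Prop) : R :=
  match excluded_middle_informative (exists m, is_lub E m) with
  | left H => proj1_sig (constructive_indefinite_description _ H)
  | right _ => 0
  end.
Definition Rinf (E : R -> Prop) : R := - Rsup (fun y => E (- y)).

Definition boundary (G : pt -> Prop) (z : pt) : Prop :=
  forall eps, 0 < eps ->
    (exists a, G a /\ pdist a z < eps) /\ (exists b, ~ G b /\ pdist b z < eps).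
Definition dG (G : pt -> Prop) (x : pt) : R :=
  Rinf (fun r => exists z, boundary G z /\ r = pdist x z).

Fixpoint sumR (f : nat -> R) (n : nat) : R :=
  match n with O => 0 | S k => sumR f k + f k end.

Definition curve_in (G : pt -> Prop) (g : R -> pt) : Prop :=
  (forall t, 0 <= t <= 1 -> G (g t)) /\
  (forall t, 0 <= t <= 1 -> forall eps, 0 < eps -> exists delta, 0 < delta /\
     forall s, 0 <= s <= 1 -> Rabs (s - t) < delta -> pdist (g s) (g t) < eps).

Definition partition01 (n : nat) (p : nat -> R) : Prop :=
  (1 <= n)%nat /\ p O = 0 /\ p n = 1 /\ (forall i, (i < n)%nat -> p i < p (S i)).

Definition rectifiable (g : R -> pt) : Prop :=
  exists L, forall n p, partition01 n p ->
    sumR (fun i => pdist (g (p (S i))) (g (p i))) n <= L.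

(* The line integral  ∫_g f |dx|  equals I: limit of Riemann-Stieltjes sums
   with respect to arc length as the mesh tends to 0. *)
Definition line_integral_is (f : pt -> R) (g : R -> pt) (I : R) : Prop :=
  forall eps, 0 < eps -> exists delta, 0 < delta /\
    forall n p tau, partition01 n p ->
      (forall i, (i < n)%nat -> p (S i) - p i < delta) ->
      (forall i, (i < n)%nat -> p i <= tau i <= p (S i)) ->
      Rabs (sumR (fun i => f (g (tau i)) * pdist (g (p (S i))) (g (p i))) n - I) < eps.

Definition k_G (G : pt -> Prop) (x y : pt) : R :=
  Rinf (fun I => exists g : R -> pt, g 0 = x /\ g 1 = y /\ curve_in G g /\
          rectifiable g /\ line_integral_is (fun z => / dG G z) g I).

Definition j_G (G : pt -> Prop) (x y : pt) : R :=
  ln (1 + pdist x y / Rmin (dG G x) (dG G y)).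

(** A is admissible in the definition of the uniformity constant A_G;
    A_G is the infimum of the admissible A (+oo if none). *)
Definition uniformity_admissible (G : pt -> Prop) (A : R) : Prop :=
  1 <= A /\ forall x y, G x -> G y -> k_G G x y <= A * j_G G x y.

(* Vertices v 0, ..., v (n-1), indices mod n, listed counterclockwise;
   strict convexity: every other vertex lies strictly to the left of each edge. *)
Definition nxt (n i : nat) : nat := ((i + 1) mod n)%nat.
Definition prv (n i : nat) : nat := ((i + n - 1) mod n)%nat.

Definition convex_polygon (n : nat) (v : nat -> pt) : Prop :=
  (3 <= n)%nat /\
  forall i j, (i < n)%nat -> (j < n)%nat -> j <> i -> j <> nxt n i ->
    0 < pcross (psub (v (nxt n i)) (v i)) (psub (v j) (v i)).

Definition poly_domain (n : nat) (v : nat -> pt) (x : pt) : Prop :=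
  forall i, (i < n)%nat -> 0 < pcross (psub (v (nxt n i)) (v i)) (psub x (v i)).

Definition inner_angle (n : nat) (v : nat -> pt) (i : nat) : R :=
  let a := psub (v (prv n i)) (v i) in
  let b := psub (v (nxt n i)) (v i) in
  acos (pdot a b / (pnorm a * pnorm b)).

Definition smallest_inner_angle (n : nat) (v : nat -> pt) (alpha : R) : Prop :=
  (exists i, (i < n)%nat /\ alpha = inner_angle n v i) /\
  (forall i, (i < n)%nat -> alpha <= inner_angle n v i).

(* Main.v *)
Require Import Defs.
From Stdlib Require Import Reals Lra Lia Psatz Classical ClassicalEpsilon.
Open Scope R_scope.

Lemma pnorm_ge0 p : 0 <= pnorm p.
Proof. unfold pnorm; apply sqrt_pos. Qed.

Lemma pnorm_sq p : pnorm p * pnorm p = fst p ^ 2 + snd p ^ 2.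
Proof. unfold pnorm; apply sqrt_sqrt; nra. Qed.

Lemma cross_le p q : pcross p q <= pnorm p * pnorm q.
Proof.
  pose proof (pnorm_sq p); pose proof (pnorm_sq q);
  pose proof (pnorm_ge0 p); pose proof (pnorm_ge0 q).
  destruct p as [a b]; destruct q as [c d]; unfold pcross; simpl fst in *; simpl snd in *.
  assert (E: (pnorm (a,b) * pnorm (c,d))*(pnorm (a,b) * pnorm (c,d)) = (a*d-b*c)*(a*d-b*c) + (a*c+b*d)*(a*c+b*d)).
  { replace ((pnorm (a,b) * pnorm (c,d))*(pnorm (a,b) * pnorm (c,d))) with ((pnorm (a,b)*pnorm (a,b))*(pnorm (c,d)*pnorm (c,d))) by ring.
    rewrite H, H0. ring. }
  assert (0 <= pnorm (a,b) * pnorm (c,d)) by (apply Rmult_le_pos; auto).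
  set (N := pnorm (a,b) * pnorm (c,d)) in *. set (X := a*d-b*c) in *. set (Y := a*c+b*d) in *. clearbody N X Y.
  assert (E2 : N*N >= X*X) by (pose proof (Rle_0_sqr Y); unfold Rsqr in *; lra).
  destruct (Rle_or_lt X N) as [?|Hc]; [auto|].
  assert (N*N < X*X) by (apply Rmult_le_0_lt_compat; lra).
  lra.
Qed.

Lemma dot_le p q : pdot p q <= pnorm p * pnorm q.
Proof.
  pose proof (pnorm_sq p); pose proof (pnorm_sq q);
  pose proof (pnorm_ge0 p); pose proof (pnorm_ge0 q).
  destruct p as [a b]; destruct q as [c d]; unfold pdot; simpl fst in *; simpl snd in *.
  assert (E: (pnorm (a,b) * pnorm (c,d))*(pnorm (a,b) * pnorm (c,d)) = (a*d-b*c)*(a*d-b*c) + (a*c+b*d)*(a*c+b*d)).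
  { replace ((pnorm (a,b) * pnorm (c,d))*(pnorm (a,b) * pnorm (c,d))) with ((pnorm (a,b)*pnorm (a,b))*(pnorm (c,d)*pnorm (c,d))) by ring.
    rewrite H, H0. ring. }
  assert (0 <= pnorm (a,b) * pnorm (c,d)) by (apply Rmult_le_pos; auto).
  set (N := pnorm (a,b) * pnorm (c,d)) in *. set (X := a*c+b*d) in *. set (Y := a*d-b*c) in *. clearbody N X Y.
  assert (E2 : N*N >= X*X) by (pose proof (Rle_0_sqr Y); unfold Rsqr in *; lra).
  destruct (Rle_or_lt X N) as [?|Hc]; [auto|].
  assert (N*N < X*X) by (apply Rmult_le_0_lt_compat; lra).
  lra.
Qed.

Lemma pnorm_le_sq p r : 0 <= r -> fst p ^ 2 + snd p ^ 2 <= r * r -> pnorm p <= r.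
Proof.
  intros Hr H. pose proof (pnorm_sq p); pose proof (pnorm_ge0 p). nra.
Qed.

Lemma pnorm_ge_sq p r : r * r <= fst p ^ 2 + snd p ^ 2 -> r <= pnorm p.
Proof.
  intros H. pose proof (pnorm_sq p); pose proof (pnorm_ge0 p). nra.
Qed.

Lemma pnorm_add_le a b c d :
  pnorm (a + c, b + d) <= pnorm (a, b) + pnorm (c, d).
Proof.
  pose proof (pnorm_sq (a,b)); pose proof (pnorm_sq (c,d));
  pose proof (pnorm_ge0 (a,b)); pose proof (pnorm_ge0 (c,d)).
  pose proof (dot_le (a,b) (c,d)). unfold pdot in *; simpl in *.
  apply pnorm_le_sq; simpl; nra.
Qed.

Lemma pdist_tri x y z : pdist x z <= pdist x y + pdist y z.
Proof.
  unfold pdist, psub.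
  replace (fst x - fst z) with ((fst x - fst y) + (fst y - fst z)) by ring.
  replace (snd x - snd z) with ((snd x - snd y) + (snd y - snd z)) by ring.
  apply pnorm_add_le.
Qed.

Lemma pdist_sym x y : pdist x y = pdist y x.
Proof.
  unfold pdist, pnorm, psub. simpl. f_equal. ring.
Qed.

Lemma pdist_ge0 x y : 0 <= pdist x y.
Proof. apply pnorm_ge0. Qed.

Lemma pdist_refl x : pdist x x = 0.
Proof. unfold pdist, pnorm, psub. replace (fst x - fst x) with 0 by ring.
  replace (snd x - snd x) with 0 by ring. simpl. replace (0*(0*1)+0*(0*1)) with 0 by ring. apply sqrt_0. Qed.

Lemma pnorm_scale k a b : pnorm (k * a, k * b) = Rabs k * pnorm (a, b).
Proof.
  unfold pnorm; simpl fst; simpl snd.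
  replace ((k*a)^2 + (k*b)^2) with (k^2 * (a^2+b^2)) by ring.
  rewrite sqrt_mult by nra. f_equal.
  rewrite <- sqrt_Rsqr_abs. unfold Rsqr. f_equal; ring.
Qed.

Lemma Rsup_lub E : (exists m, is_lub E m) -> is_lub E (Rsup E).
Proof.
  intros H. unfold Rsup. destruct (excluded_middle_informative _) as [H'|H'].
  - destruct (constructive_indefinite_description _ H'). simpl. auto.
  - contradiction.
Qed.

Lemma Rinf_le E x lb : E x -> (forall y, E y -> lb <= y) -> Rinf E <= x.
Proof.
  intros Ex Hlb. unfold Rinf.
  assert (Hl: exists m, is_lub (fun y => E (- y)) m).
  { destruct (completeness (fun y => E (-y))) as [m Hm].
    - exists (- lb). intros y Hy. apply Hlb in Hy. lra.
    - exists (- x). rewrite Ropp_involutive. auto.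
    - eauto. }
  apply Rsup_lub in Hl. destruct Hl as [Hub _].
  assert (- x <= Rsup (fun y => E (- y))). { apply Hub. rewrite Ropp_involutive; auto. }
  lra.
Qed.

Lemma Rinf_ge E m : (exists x, E x) -> (forall y, E y -> m <= y) -> m <= Rinf E.
Proof.
  intros [x Ex] Hlb. unfold Rinf.
  assert (Hl: exists m, is_lub (fun y => E (- y)) m).
  { destruct (completeness (fun y => E (-y))) as [m' Hm].
    - exists (- m). intros y Hy. apply Hlb in Hy. lra.
    - exists (- x). rewrite Ropp_involutive. auto.
    - eauto. }
  apply Rsup_lub in Hl. destruct Hl as [_ Hleast].
  assert (Rsup (fun y => E (- y)) <= - m).
  { apply Hleast. intros y Hy. apply Hlb in Hy. lra. }
  lra.
Qed.
Definition seg (z w : pt) (t : R) : pt :=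
  (fst z + t * (fst w - fst z), snd z + t * (snd w - snd z)).

Lemma seg_dist z w t t' : pdist (seg z w t) (seg z w t') = Rabs (t - t') * pdist w z.
Proof.
  unfold pdist, psub, seg; simpl.
  rewrite <- pnorm_scale. f_equal. f_equal; ring.
Qed.

Lemma seg0 z w : seg z w 0 = z.
Proof. destruct z; unfold seg; simpl; f_equal; ring. Qed.
Lemma seg1 z w : seg z w 1 = w.
Proof. destruct z, w; unfold seg; simpl; f_equal; ring. Qed.

Lemma boundary_on_seg (G : pt -> Prop) z w : G z -> ~ G w ->
  exists p, boundary G p /\ pdist z p <= pdist z w.
Proof.
  intros Gz Gw.
  set (T := fun t => 0 <= t <= 1 /\ forall t', 0 <= t' <= t -> G (seg z w t')).
  destruct (completeness T) as [ts [Hub Hl]].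
  { exists 1. intros t [? _]. lra. }
  { exists 0. split; [lra|]. intros t' Ht'. replace t' with 0 by lra. rewrite seg0; auto. }
  assert (T0 : T 0). { split; [lra|]. intros t' Ht'. replace t' with 0 by lra. rewrite seg0; auto. }
  assert (ts0 : 0 <= ts) by (apply Hub; auto).
  assert (ts1 : ts <= 1) by (apply Hl; intros t [? _]; lra).
  assert (Happ : forall r, r < ts -> exists t, T t /\ r < t).
  { intros r Hr. apply NNPP. intros Hn.
    assert (ts <= r); [|lra]. apply Hl. intros t Ht.
    destruct (Rle_or_lt t r); auto. exfalso; apply Hn; eauto. }
  set (Dw := pdist w z).
  assert (HD : 0 <= Dw) by apply pdist_ge0.
  exists (seg z w ts). split.
  - intros eps Heps. set (eta := eps / (Dw + 1)).
    assert (Heta : 0 < eta) by (unfold eta; apply Rdiv_lt_0_compat; lra).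
    assert (Heta2 : eta * Dw < eps).
    { unfold eta. apply Rmult_lt_reg_r with (Dw + 1); [lra|].
      field_simplify; [|lra]. nra. }
    split.
    + destruct (Happ (ts - eta)) as [t [[Ht Tt] Hlt]]; [lra|].
      assert (t <= ts) by (apply Hub; split; auto).
      exists (seg z w t). split. apply Tt; lra.
      rewrite seg_dist. fold Dw. rewrite Rabs_left1 by lra. nra.
    + apply NNPP; intros Hn.
      assert (HG : forall b, pdist b (seg z w ts) < eps -> G b).
      { intros b Hb. apply NNPP; intros Hb'. apply Hn; eauto. }
      destruct (Req_dec ts 1) as [E1|E1].
      * apply Gw. rewrite <- (seg1 z w). apply HG. rewrite E1, pdist_refl. lra.
      * set (mu := Rmin eta (1 - ts) / 2).
        assert (Hmu : 0 < mu) by (unfold mu; apply Rmin_case; lra).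
        assert (Hmu2 : mu <= eta /\ mu <= 1 - ts)
          by (unfold mu; split; [pose proof (Rmin_l eta (1-ts))|pose proof (Rmin_r eta (1-ts))];
              pose proof (Rmin_l eta (1-ts)); pose proof (Rmin_r eta (1-ts)); apply Rmin_case_strong; lra).
        assert (T (ts + mu)).
        { split; [lra|]. intros t' Ht'.
          destruct (Rlt_or_le t' ts) as [Hlt|Hge].
          - destruct (Happ t' Hlt) as [t [[Ht Tt] Hlt2]]. apply Tt; lra.
          - apply HG. rewrite seg_dist. fold Dw. rewrite Rabs_right by lra. nra. }
        assert (ts + mu <= ts) by (apply Hub; auto). lra.
  - assert (E1 : pdist z (seg z w ts) = Rabs (0 - ts) * Dw) by (unfold Dw; rewrite <- seg_dist, seg0; auto).
    assert (E2 : pdist z w = Rabs (0 - 1) * Dw) by (unfold Dw; rewrite <- seg_dist, seg0, seg1; auto).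
    rewrite E1, E2. rewrite Rabs_left1 by lra. rewrite Rabs_left1 by lra. nra.
Qed.

Lemma dG_le (G : pt -> Prop) z w : G z -> ~ G w -> dG G z <= pdist z w.
Proof.
  intros Gz Gw. destruct (boundary_on_seg G z w Gz Gw) as [p [Bp Hp]].
  eapply Rle_trans; [|exact Hp]. unfold dG.
  apply Rinf_le with 0. eauto. intros y [q [_ ->]]. apply pdist_ge0.
Qed.

Lemma dG_ge (G : pt -> Prop) z w0 m : G z -> ~ G w0 ->
  (forall w, ~ G w -> m <= pdist z w) -> m <= dG G z.
Proof.
  intros Gz Gw0 H. destruct (boundary_on_seg G z w0 Gz Gw0) as [p [Bp _]].
  unfold dG. apply Rinf_ge. eauto.
  intros y [q [Bq ->]]. apply Rnot_lt_le. intros Hlt.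
  destruct (Bq (m - pdist z q)) as [_ [b [Gb Hb]]]; [lra|].
  pose proof (H b Gb). pose proof (pdist_tri z q b). rewrite (pdist_sym q b) in *. lra.
Qed.

Lemma dG_lip (G : pt -> Prop) a b w0 : G a -> ~ G w0 -> dG G b <= dG G a + pdist a b.
Proof.
  intros Ga Gw0. destruct (boundary_on_seg G a w0 Ga Gw0) as [p [Bp _]].
  assert (dG G b - pdist a b <= dG G a); [|lra].
  unfold dG at 2. apply Rinf_ge. eauto.
  intros y [q [Bq ->]].
  assert (dG G b <= pdist b q).
  { unfold dG. apply Rinf_le with 0. eauto. intros y [q' [_ ->]]. apply pdist_ge0. }
  pose proof (pdist_tri b a q). rewrite (pdist_sym b a) in *. lra.
Qed.
Lemma ln_le_sub1 x : 0 < x -> ln x <= x - 1.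
Proof. intros Hx. pose proof (exp_ineq1_le (ln x)). rewrite exp_ln in H; lra. Qed.

Lemma ln_le_mono x y : 0 < x -> x <= y -> ln x <= ln y.
Proof. intros Hx Hxy. destruct (Req_dec x y) as [->|]; [lra|]. left; apply ln_increasing; lra. Qed.

Lemma ln_div_le a b : 0 < a -> 0 < b -> ln b - ln a <= (b - a) / a.
Proof.
  intros Ha Hb. replace (ln b - ln a) with (ln (b / a)).
  - replace ((b - a) / a) with (b / a - 1) by (field; lra). apply ln_le_sub1.
    apply Rdiv_lt_0_compat; lra.
  - unfold Rdiv. rewrite ln_mult, ln_Rinv; try lra. apply Rinv_0_lt_compat; lra.
Qed.

Lemma step_ln (da db r : R) : 0 < da -> 0 < db -> 0 <= r -> db <= da + r ->
  ln db - ln da <= / Rmin da db * r.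
Proof.
  intros Ha Hb Hr H. eapply Rle_trans. apply ln_div_le; auto.
  assert (Hm : 0 < Rmin da db) by (apply Rmin_case; auto).
  assert (Rmin da db <= da) by apply Rmin_l.
  apply Rle_trans with (r / da). unfold Rdiv; apply Rmult_le_compat_r; [left; apply Rinv_0_lt_compat; lra|lra].
  unfold Rdiv. rewrite (Rmult_comm (/ Rmin _ _)). apply Rmult_le_compat_l; auto.
  apply Rinv_le_contravar; auto.
Qed.

Lemma step_rad (da db ra rb r s : R) : 0 < da -> 0 < db -> 0 < ra -> 0 < rb -> 0 <= r -> 0 < s ->
  ra <= rb + r -> db <= s * rb ->
  (- ln rb / s) - (- ln ra / s) <= / Rmin da db * r.
Proof.
  intros Ha Hb Hra Hrb Hr Hs H1 H2.
  replace ((- ln rb / s) - (- ln ra / s)) with ((ln ra - ln rb) / s) by (field; lra).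
  pose proof (ln_div_le rb ra Hrb Hra).
  assert (Hm : 0 < Rmin da db) by (apply Rmin_case; auto).
  assert (Rmin da db <= db) by apply Rmin_r.
  apply Rle_trans with (r / (s * rb)).
  - apply Rmult_le_reg_r with s; auto.
    replace ((ln ra - ln rb) / s * s) with (ln ra - ln rb) by (field; lra).
    replace (r / (s * rb) * s) with (r / rb) by (field; lra).
    apply Rle_trans with ((ra - rb) / rb); auto.
    unfold Rdiv; apply Rmult_le_compat_r; [left; apply Rinv_0_lt_compat; lra|lra].
  - unfold Rdiv. rewrite (Rmult_comm (/ Rmin _ _)). apply Rmult_le_compat_l; auto.
    apply Rinv_le_contravar; nra.
Qed.

Lemma tele (f phi : nat -> R) m n : (m <= n)%nat ->
  (forall i, (m <= i < n)%nat -> phi (S i) - phi i <= f i) ->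
  phi n - phi m <= sumR f n - sumR f m.
Proof.
  intros Hmn H. induction n.
  - assert (m = 0)%nat by lia. subst. simpl. lra.
  - destruct (Nat.eq_dec m (S n)) as [->|Hne]; [lra|].
    assert (m <= n)%nat by lia. simpl.
    specialize (IHn H0 (fun i Hi => H i ltac:(lia))). specialize (H n ltac:(lia)). lra.
Qed.

Lemma sumR_le (f g : nat -> R) n : (forall i, (i < n)%nat -> f i <= g i) -> sumR f n <= sumR g n.
Proof.
  induction n; intros H; simpl; [lra|].
  specialize (IHn (fun i Hi => H i ltac:(lia))). specialize (H n ltac:(lia)). lra.
Qed.

Lemma sum_dist (z : nat -> pt) n : pdist (z n) (z O) <= sumR (fun i => pdist (z (S i)) (z i)) n.
Proof.
  induction n; simpl. rewrite pdist_refl; lra.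
  pose proof (pdist_tri (z (S n)) (z n) (z O)). lra.
Qed.

Lemma argmax (f : nat -> R) n : exists m, (m <= n)%nat /\ forall i, (i <= n)%nat -> f i <= f m.
Proof.
  induction n.
  - exists O. split; auto. intros i Hi. replace i with O by lia. lra.
  - destruct IHn as [m [Hm H]]. destruct (Rle_or_lt (f (S n)) (f m)).
    + exists m. split; [lia|]. intros i Hi. destruct (Nat.eq_dec i (S n)) as [->|]; auto. apply H; lia.
    + exists (S n). split; auto. intros i Hi. destruct (Nat.eq_dec i (S n)) as [->|]; [lra|].
      specialize (H i ltac:(lia)). lra.
Qed.
Lemma sumR_scale_r (f : nat -> R) k n : sumR (fun i => f i * k) n = sumR f n * k.
Proof. induction n; simpl; [ring|]. rewrite IHn. ring. Qed.
Lemma exp_sq_bound u : 0 <= u -> u * u / 4 + u <= exp u.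
Proof.
  intros Hu. replace (exp u) with (exp (u/2) * exp (u/2)) by (rewrite <- exp_plus; f_equal; field).
  pose proof (exp_ineq1_le (u/2)). nra.
Qed.

Lemma asymp (A K L h0 : R) : 0 <= A -> A < K -> 0 < L -> 0 < h0 ->
  (forall h D0, 0 < h -> h < h0 -> 0 < D0 ->
     Rmin (L / D0) (K * (ln D0 - ln h)) <= A * ln (1 + L / h)) -> False.
Proof.
  intros HA HAK HL Hh0 H.
  set (eta := (K - A) / (2 * K)).
  assert (HK : 0 < K) by lra.
  assert (Heta : 0 < eta) by (unfold eta; apply Rdiv_lt_0_compat; lra).
  assert (Heta1 : K * (1 - eta) = (K + A) / 2) by (unfold eta; field; lra).
  set (Y := 1 + Rabs (ln (L / h0)) + 2 * A / (K - A) + 4 * A / (eta * eta) + A / eta).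
  assert (P1 : 0 <= 2 * A / (K - A)) by (apply Rmult_le_pos; [lra|left; apply Rinv_0_lt_compat; lra]).
  assert (P2 : 0 <= 4 * A / (eta * eta)) by (apply Rmult_le_pos; [lra|left; apply Rinv_0_lt_compat; nra]).
  assert (P3 : 0 <= A / eta) by (apply Rmult_le_pos; [lra|left; apply Rinv_0_lt_compat; nra]).
  pose proof (Rabs_pos (ln (L / h0))) as P0.
  pose proof (Rle_abs (ln (L / h0))) as P0'.
  assert (HY : 1 <= Y) by (unfold Y; lra).
  set (h := L * exp (- Y)). set (D0 := L * exp (- (eta * Y))).
  assert (Hh : 0 < h) by (unfold h; apply Rmult_lt_0_compat; auto; apply exp_pos).
  assert (HD0 : 0 < D0) by (unfold D0; apply Rmult_lt_0_compat; auto; apply exp_pos).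
  assert (Hhh0 : h < h0).
  { unfold h. assert (exp (- Y) < h0 / L).
    { rewrite <- (exp_ln (h0 / L)) by (apply Rdiv_lt_0_compat; lra).
      apply exp_increasing. unfold Rdiv at 1. rewrite ln_mult, ln_Rinv by (try apply Rinv_0_lt_compat; lra).
      assert (EL : ln (L / h0) = ln L + - ln h0).
      { unfold Rdiv. rewrite ln_mult, ln_Rinv by (try apply Rinv_0_lt_compat; lra). auto. }
      unfold Y. lra. }
    apply Rmult_lt_reg_r with (/ L). apply Rinv_0_lt_compat; lra.
    replace (L * exp (- Y) * / L) with (exp (-Y)) by (field; lra). auto. }
  specialize (H h D0 Hh Hhh0 HD0).
  assert (E1 : L / h = exp Y) by (unfold h; rewrite exp_Ropp; field; split; [apply Rgt_not_eq, exp_pos|lra]).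
  assert (E2 : L / D0 = exp (eta * Y)) by (unfold D0; rewrite exp_Ropp; field; split; [apply Rgt_not_eq, exp_pos|lra]).
  assert (E3 : ln D0 - ln h = (1 - eta) * Y).
  { unfold D0, h. rewrite !ln_mult by (try apply exp_pos; lra). rewrite !ln_exp. ring. }
  rewrite E1, E2, E3 in H.
  assert (E4 : ln (1 + exp Y) <= Y + 1).
  { rewrite <- (ln_exp (Y + 1)). apply ln_le_mono. pose proof (exp_pos Y); lra.
    rewrite exp_plus. pose proof (exp_ineq1 1 ltac:(lra)). pose proof (exp_pos Y).
    pose proof (exp_ineq1_le Y). nra. }
  assert (R1 : A * ln (1 + exp Y) <= A * (Y + 1)) by (apply Rmult_le_compat_l; auto).
  assert (R2 : A * (Y + 1) < K * ((1 - eta) * Y)).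
  { rewrite <- Rmult_assoc, Heta1.
    assert (2 * A / (K - A) < Y) by (unfold Y; lra).
    assert (2 * A < Y * (K - A)).
    { apply Rmult_lt_reg_r with (/ (K - A)). apply Rinv_0_lt_compat; lra.
      replace (Y * (K - A) * / (K - A)) with Y by (field; lra). unfold Rdiv in H0. lra. }
    nra. }
  assert (R3 : A * (Y + 1) < exp (eta * Y)).
  { pose proof (exp_sq_bound (eta * Y) ltac:(nra)).
    assert (A / eta < Y) by (unfold Y; lra).
    assert (A < eta * Y).
    { apply Rmult_lt_reg_r with (/ eta). apply Rinv_0_lt_compat; lra.
      replace (eta * Y * / eta) with Y by (field; lra). auto. }
    assert (4 * A / (eta * eta) < Y) by (unfold Y; lra).
    assert (4 * A < Y * (eta * eta)).
    { apply Rmult_lt_reg_r with (/ (eta * eta)). apply Rinv_0_lt_compat; nra.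
      replace (Y * (eta * eta) * / (eta * eta)) with Y by (field; lra). unfold Rdiv in H3. lra. }
    assert (A * Y <= eta * Y * (eta * Y) / 4) by nra.
    lra. }
  revert H. apply Rmin_case; lra.
Qed.
Lemma sumR_ext (f g : nat -> R) n : (forall i, (i < n)%nat -> f i = g i) -> sumR f n = sumR g n.
Proof.
  induction n; intros H; simpl; auto. rewrite IHn by (intros; apply H; lia). rewrite H by lia. auto.
Qed.

Lemma sumR_scale (f : nat -> R) k n : sumR (fun i => k * f i) n = k * sumR f n.
Proof. induction n; simpl; [ring|]. rewrite IHn. ring. Qed.

Section Local.
Variables (G : pt -> Prop) (v u1 u2 : pt).
Hypothesis Hu1 : fst u1 ^ 2 + snd u1 ^ 2 = 1.
Hypothesis Hu2 : fst u2 ^ 2 + snd u2 ^ 2 = 1.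
Hypothesis Hsig : 0 < pcross u2 u1.
Hypothesis Hwedge : forall z, G z -> 0 < pcross u2 (psub z v) /\ 0 < pcross (psub z v) u1.
Hypothesis Hpos : forall z, G z -> 0 < dG G z.

Definition sL := pnorm (psub u1 u2) / 2.

Lemma pnorm_u1 : pnorm u1 = 1.
Proof. unfold pnorm. rewrite Hu1. apply sqrt_1. Qed.
Lemma pnorm_u2 : pnorm u2 = 1.
Proof. unfold pnorm. rewrite Hu2. apply sqrt_1. Qed.

Lemma sL_pos : 0 < sL.
Proof.
  unfold sL. pose proof (cross_le u2 (psub u1 u2)). rewrite pnorm_u2 in H.
  assert (pcross u2 (psub u1 u2) = pcross u2 u1) by (unfold pcross, psub; simpl; ring).
  lra.
Qed.

Lemma v_notin : ~ G v.
Proof.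
  intros Gv. destruct (Hwedge v Gv) as [H _]. unfold pcross, psub in H; simpl in H.
  replace (fst u2 * (snd v - snd v) - snd u2 * (fst v - fst v)) with 0 in H by ring. lra.
Qed.

Lemma dG_le_d1 z : G z -> dG G z <= pcross u2 (psub z v).
Proof.
  intros Gz. set (d1 := pcross u2 (psub z v)).
  set (w := (fst z - d1 * (- snd u2), snd z - d1 * fst u2)).
  assert (Hw : ~ G w).
  { intros Gw. destruct (Hwedge w Gw) as [H _].
    assert (pcross u2 (psub w v) = d1 - d1 * (fst u2 ^ 2 + snd u2 ^ 2))
      by (unfold w, d1, pcross, psub; simpl; ring).
    rewrite Hu2 in H0. lra. }
  eapply Rle_trans. apply (dG_le G z w Gz Hw).
  destruct (Hwedge z Gz) as [H1 _]. fold d1 in H1.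
  unfold pdist, psub, w; simpl.
  replace (fst z - (fst z - d1 * - snd u2)) with (d1 * - snd u2) by ring.
  replace (snd z - (snd z - d1 * fst u2)) with (d1 * fst u2) by ring.
  rewrite pnorm_scale. unfold pnorm; simpl.
  replace ((- snd u2) * ((- snd u2) * 1) + fst u2 * (fst u2 * 1)) with (fst u2 ^2 + snd u2 ^2) by ring.
  rewrite Hu2, sqrt_1, Rabs_right by lra. lra.
Qed.

Lemma dG_le_d2 z : G z -> dG G z <= pcross (psub z v) u1.
Proof.
  intros Gz. set (d2 := pcross (psub z v) u1).
  set (w := (fst z - d2 * snd u1, snd z - d2 * (- fst u1))).
  assert (Hw : ~ G w).
  { intros Gw. destruct (Hwedge w Gw) as [_ H].
    assert (pcross (psub w v) u1 = d2 - d2 * (fst u1 ^ 2 + snd u1 ^ 2))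
      by (unfold w, d2, pcross, psub; simpl; ring).
    rewrite Hu1 in H0. lra. }
  eapply Rle_trans. apply (dG_le G z w Gz Hw).
  destruct (Hwedge z Gz) as [_ H1]. fold d2 in H1.
  unfold pdist, psub, w; simpl.
  replace (fst z - (fst z - d2 * snd u1)) with (d2 * snd u1) by ring.
  replace (snd z - (snd z - d2 * - fst u1)) with (d2 * - fst u1) by ring.
  rewrite pnorm_scale. unfold pnorm; simpl.
  replace (snd u1 * (snd u1 * 1) + (- fst u1) * ((- fst u1) * 1)) with (fst u1 ^2 + snd u1 ^2) by ring.
  rewrite Hu1, sqrt_1, Rabs_right by lra. lra.
Qed.

Lemma dG_le_s z : G z -> dG G z <= sL * pdist z v.
Proof.
  intros Gz. pose proof (dG_le_d1 z Gz). pose proof (dG_le_d2 z Gz).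
  pose proof (cross_le (psub z v) (psub u1 u2)).
  assert (pcross u2 (psub z v) + pcross (psub z v) u1 = pcross (psub z v) (psub u1 u2))
    by (unfold pcross, psub; simpl; ring).
  unfold sL, pdist. lra.
Qed.

Lemma dist_v_pos z : G z -> 0 < pdist z v.
Proof.
  intros Gz. pose proof (dG_le_s z Gz). pose proof (Hpos z Gz). pose proof sL_pos.
  pose proof (pdist_ge0 z v). destruct (Req_dec (pdist z v) 0) as [E|E].
  rewrite E in H. lra. lra.
Qed.

Definition chain_sum (z : nat -> pt) n :=
  sumR (fun i => / Rmin (dG G (z i)) (dG G (z (S i))) * pdist (z (S i)) (z i)) n.

Lemma chain_bound (z : nat -> pt) n h D0 :
  (forall i, (i <= n)%nat -> G (z i)) -> 0 < h -> 0 < D0 ->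
  dG G (z O) = h -> pdist (z n) v <= h / sL ->
  Rmin (pdist (z n) (z O) / D0) ((1 + / sL) * (ln D0 - ln h)) <= chain_sum z n.
Proof.
  intros HG Hh HD0 Hx Hy. pose proof sL_pos as Hs.
  destruct (argmax (fun i => dG G (z i)) n) as [m [Hm Hmax]]. simpl in Hmax.
  set (D := dG G (z m)).
  assert (Hposi : forall i, (i <= n)%nat -> 0 < dG G (z i)) by (intros; apply Hpos; auto).
  destruct (Rle_or_lt D D0) as [HD|HD].
  - apply Rle_trans with (pdist (z n) (z O) / D0); [apply Rmin_l|].
    apply Rle_trans with (sumR (fun i => / D0 * pdist (z (S i)) (z i)) n).
    + rewrite sumR_scale. pose proof (sum_dist z n). unfold Rdiv. rewrite Rmult_comm.
      apply Rmult_le_compat_l; auto. left; apply Rinv_0_lt_compat; auto.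
    + apply sumR_le. intros i Hi. apply Rmult_le_compat_r; [apply pdist_ge0|].
      apply Rinv_le_contravar. apply Rmin_case; apply Hposi; lia.
      eapply Rle_trans; [apply Rmin_l|]. eapply Rle_trans; [apply Hmax; lia|]. auto.
  - apply Rle_trans with ((1 + / sL) * (ln D0 - ln h)); [apply Rmin_r|].
    set (f := fun i => / Rmin (dG G (z i)) (dG G (z (S i))) * pdist (z (S i)) (z i)).
    assert (T1 : ln (dG G (z m)) - ln (dG G (z O)) <= sumR f m - sumR f O).
    { apply (tele f (fun i => ln (dG G (z i)))). lia.
      intros i Hi. unfold f. apply step_ln; try (apply Hposi; lia). apply pdist_ge0.
      pose proof (dG_lip G (z i) (z (S i)) v (HG i ltac:(lia)) v_notin).
      rewrite pdist_sym; auto. }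
    assert (T2 : (- ln (pdist (z n) v) / sL) - (- ln (pdist (z m) v) / sL) <= sumR f n - sumR f m).
    { apply (tele f (fun i => - ln (pdist (z i) v) / sL)). lia.
      intros i Hi. unfold f. apply step_rad; try (apply Hposi; lia); try (apply dist_v_pos; apply HG; lia); auto.
      apply pdist_ge0. pose proof (pdist_tri (z i) (z (S i)) v). rewrite (pdist_sym (z i) (z (S i))) in H. lra.
      apply dG_le_s; apply HG; lia. }
    simpl in T1. unfold chain_sum; fold f.
    assert (Hzm : D / sL <= pdist (z m) v).
    { pose proof (dG_le_s (z m) (HG m Hm)). fold D in H.
      apply Rmult_le_reg_r with sL; auto. unfold Rdiv. rewrite Rmult_assoc, Rinv_l by lra. lra. }
    assert (L1 : ln D - ln sL <= ln (pdist (z m) v)).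
    { unfold Rminus. rewrite <- ln_Rinv by auto. rewrite <- ln_mult. apply ln_le_mono. apply Rmult_lt_0_compat; [lra|apply Rinv_0_lt_compat; auto].
      auto. lra. apply Rinv_0_lt_compat; auto. }
    assert (L2 : ln (pdist (z n) v) <= ln h - ln sL).
    { unfold Rminus. rewrite <- ln_Rinv by auto. rewrite <- ln_mult. apply ln_le_mono. apply dist_v_pos; apply HG; lia.
      auto. auto. apply Rinv_0_lt_compat; auto. }
    assert (L3 : ln D0 <= ln D) by (apply ln_le_mono; lra).
    fold D in T1. rewrite Hx in T1.
    assert (E : (- ln (pdist (z n) v) / sL) - (- ln (pdist (z m) v) / sL) = / sL * (ln (pdist (z m) v) - ln (pdist (z n) v))) by (field; lra).
    rewrite E in T2.
    assert (/ sL * (ln D0 - ln h) <= / sL * (ln (pdist (z m) v) - ln (pdist (z n) v))).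
    { apply Rmult_le_compat_l. left; apply Rinv_0_lt_compat; auto. lra. }
    lra.
Qed.


Lemma integral_bound (g : R -> pt) I h D0 :
  curve_in G g -> line_integral_is (fun z => / dG G z) g I ->
  0 < h -> 0 < D0 -> dG G (g 0) = h -> pdist (g 1) v <= h / sL ->
  Rmin (pdist (g 1) (g 0) / D0) ((1 + / sL) * (ln D0 - ln h)) <= I.
Proof.
  intros [HGg _] HI Hh HD0 Hx Hy.
  set (B := Rmin (pdist (g 1) (g 0) / D0) ((1 + / sL) * (ln D0 - ln h))).
  apply Rnot_lt_le. intros Hlt.
  destruct (HI (B - I)) as [delta [Hd Hint]]; [lra|].
  destruct (archimed_cor1 delta Hd) as [N [HN HN0]].
  assert (HNr : 0 < INR N) by (apply lt_0_INR; auto).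
  set (p := fun i : nat => INR i / INR N).
  assert (Hp0 : p O = 0) by (unfold p; simpl; field; lra).
  assert (HpN : p N = 1) by (unfold p; field; lra).
  assert (HpS : forall i, p (S i) - p i = / INR N) by (intros; unfold p; rewrite S_INR; field; lra).
  assert (Hpr : forall i, (i <= N)%nat -> 0 <= p i <= 1).
  { intros i Hi. unfold p. split. unfold Rdiv; apply Rmult_le_pos; [apply pos_INR|left; apply Rinv_0_lt_compat; auto].
    apply Rmult_le_reg_r with (INR N); auto. unfold Rdiv; rewrite Rmult_assoc, Rinv_l by lra.
    rewrite Rmult_1_r, Rmult_1_l. apply le_INR; auto. }
  assert (Hpart : partition01 N p).
  { split; [lia|]. split; auto. split; auto. intros i Hi. pose proof (HpS i).
    pose proof (Rinv_0_lt_compat _ HNr). lra. }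
  set (tau := fun i => if Rle_dec (dG G (g (p i))) (dG G (g (p (S i)))) then p i else p (S i)).
  specialize (Hint N p tau Hpart).
  assert (Hmesh : forall i, (i < N)%nat -> p (S i) - p i < delta) by (intros; rewrite HpS; auto).
  assert (Htau : forall i, (i < N)%nat -> p i <= tau i <= p (S i)).
  { intros i Hi. pose proof (HpS i). pose proof (Rinv_0_lt_compat _ HNr).
    unfold tau. destruct (Rle_dec _ _); lra. }
  specialize (Hint Hmesh Htau).
  set (z := fun i => g (p i)).
  assert (Hz : forall i, (i <= N)%nat -> G (z i)) by (intros; apply HGg; apply Hpr; auto).
  assert (Hsum : sumR (fun i => / dG G (g (tau i)) * pdist (g (p (S i))) (g (p i))) N = chain_sum z N).
  { unfold chain_sum. apply sumR_ext. intros i Hi. unfold z, tau.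
    destruct (Rle_dec _ _) as [H|H].
    - rewrite Rmin_left; auto.
    - rewrite Rmin_right; auto. lra. }
  rewrite Hsum in Hint.
  assert (Hz0 : z O = g 0) by (unfold z; rewrite Hp0; auto).
  assert (HzN : z N = g 1) by (unfold z; rewrite HpN; auto).
  pose proof (chain_bound z N h D0 Hz Hh HD0 ltac:(rewrite Hz0; auto) ltac:(rewrite HzN; auto)).
  rewrite Hz0, HzN in H. fold B in H.
  apply Rabs_def2 in Hint. lra.
Qed.

Lemma k_lower (x y : pt) h D0 :
  (exists g, g 0 = x /\ g 1 = y /\ curve_in G g /\ rectifiable g /\
      exists I, line_integral_is (fun z => / dG G z) g I) ->
  0 < h -> 0 < D0 -> dG G x = h -> pdist y v <= h / sL ->
  Rmin (pdist y x / D0) ((1 + / sL) * (ln D0 - ln h)) <= k_G G x y.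
Proof.
  intros [g0 [g00 [g01 [Hc0 [Hr0 [I0 HI0]]]]]] Hh HD0 Hx Hy.
  unfold k_G. apply Rinf_ge.
  - exists I0. exists g0. repeat split; auto; apply Hc0.
  - intros I [g [<- [<- [Hc [_ HI]]]]]. apply integral_bound; auto.
Qed.


Lemma tele_eq (p : nat -> R) n : sumR (fun i => p (S i) - p i) n = p n - p O.
Proof. induction n; simpl; [ring|]. rewrite IHn. ring. Qed.

Lemma part_mono n p : partition01 n p -> forall i, (i <= n)%nat -> 0 <= p i <= 1.
Proof.
  intros [Hn [H0 [Hn1 Hinc]]].
  assert (M : forall i j, (i <= j <= n)%nat -> p i <= p j).
  { intros i j Hij. induction j. replace i with O by lia. lra.
    destruct (Nat.eq_dec i (S j)) as [->|]; [lra|].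
    specialize (IHj ltac:(lia)). specialize (Hinc j ltac:(lia)). lra. }
  intros i Hi. split. rewrite <- H0. apply M; lia. rewrite <- Hn1. apply M; lia.
Qed.

Lemma segment_curve (x y : pt) h :
  0 < h -> (forall t, 0 <= t <= 1 -> G (seg x y t) /\ dG G (seg x y t) = h) ->
  exists g, g 0 = x /\ g 1 = y /\ curve_in G g /\ rectifiable g /\
      exists I, line_integral_is (fun z => / dG G z) g I.
Proof.
  intros Hh Hseg. exists (seg x y). split; [apply seg0|]. split; [apply seg1|].
  pose proof (pdist_ge0 y x) as HD.
  split; [split|split].
  - intros t Ht. apply Hseg; auto.
  - intros t Ht eps Heps. exists (eps / (pdist y x + 1)). split.
    apply Rdiv_lt_0_compat; lra.
    intros s Hs Hst. rewrite seg_dist.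
    apply Rle_lt_trans with (eps / (pdist y x + 1) * pdist y x).
    apply Rmult_le_compat_r; lra.
    apply Rmult_lt_reg_r with (pdist y x + 1); [lra|]. field_simplify; [|lra]. nra.
  - exists (pdist y x). intros n p Hp.
    rewrite (sumR_ext _ (fun i => (p (S i) - p i) * pdist y x)).
    + rewrite sumR_scale_r. rewrite tele_eq. destruct Hp as [_ [-> [-> _]]]. lra.
    + intros i Hi. rewrite seg_dist. rewrite Rabs_right; auto. destruct Hp as [_ [_ [_ Hinc]]].
      specialize (Hinc i Hi). lra.
  - exists (/ h * pdist y x). intros eps Heps. exists 1. split; [lra|].
    intros n p tau Hp Hmesh Htau.
    rewrite (sumR_ext _ (fun i => / h * ((p (S i) - p i) * pdist y x))).
    + rewrite sumR_scale, sumR_scale_r, tele_eq. destruct Hp as [_ [-> [-> _]]].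
      replace (/ h * ((1 - 0) * pdist y x) - / h * pdist y x) with 0 by ring. rewrite Rabs_R0; auto.
    + intros i Hi. rewrite seg_dist. rewrite Rabs_right.
      2: { destruct Hp as [_ [_ [_ Hinc]]]. specialize (Hinc i Hi). lra. }
      pose proof (part_mono n p Hp i ltac:(lia)). pose proof (part_mono n p Hp (S i) ltac:(lia)).
      specialize (Htau i Hi).
      destruct (Hseg (tau i) ltac:(lra)) as [_ ->]. ring.
Qed.
Variable c : R.
Hypothesis Hc : 0 < c.
Hypothesis Htrunc : forall z, 0 < pcross u2 (psub z v) -> 0 < pcross (psub z v) u1 ->
  pdist z v < c -> G z.

Definition ypt h : pt := (fst v + h * (fst u1 + fst u2) / pcross u2 u1,
                           snd v + h * (snd u1 + snd u2) / pcross u2 u1).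
Definition xpt h : pt := (fst (ypt h) + (c / 2) * fst u2, snd (ypt h) + (c / 2) * snd u2).

Lemma PM : pnorm (fst u1 + fst u2, snd u1 + snd u2) * pnorm (psub u1 u2) = 2 * pcross u2 u1.
Proof.
  unfold pnorm, psub; simpl fst; simpl snd. rewrite <- sqrt_mult by (apply Rplus_le_le_0_compat; apply pow2_ge_0).
  replace (2 * pcross u2 u1) with (sqrt ((2 * pcross u2 u1) ^ 2)).
  2: { rewrite sqrt_pow2; auto. lra. }
  f_equal. unfold pcross.
  set (a := fst u1) in *; set (b := snd u1) in *; set (c' := fst u2) in *; set (d := snd u2) in *.
  replace ((a + c') ^ 2 + (b + d) ^ 2) with (2 + 2 * (a*c' + b*d)) by (ring_simplify; ring_simplify in Hu1; ring_simplify in Hu2; lra).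
  replace ((a - c') ^ 2 + (b - d) ^ 2) with (2 - 2 * (a*c' + b*d)) by (ring_simplify; ring_simplify in Hu1; ring_simplify in Hu2; lra).
  replace ((2 * (c' * b - d * a)) ^ 2) with (4 * ((a^2+b^2)*(c'^2+d^2) - (a*c'+b*d)^2)) by ring.
  rewrite Hu1, Hu2. ring.
Qed.

Lemma ydist h : 0 < h -> pdist (ypt h) v = h / sL.
Proof.
  intros Hh. pose proof sL_pos. unfold pdist, ypt, psub; simpl.
  replace (fst v + h * (fst u1 + fst u2) / pcross u2 u1 - fst v) with ((h / pcross u2 u1) * (fst u1 + fst u2)) by (field; lra).
  replace (snd v + h * (snd u1 + snd u2) / pcross u2 u1 - snd v) with ((h / pcross u2 u1) * (snd u1 + snd u2)) by (field; lra).
  rewrite pnorm_scale. rewrite Rabs_right by (apply Rle_ge, Rlt_le, Rdiv_lt_0_compat; lra).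
  pose proof PM. unfold sL in *.
  assert (pnorm (psub u1 u2) <> 0) by lra.
  apply Rmult_eq_reg_r with (pnorm (psub u1 u2)); auto.
  rewrite Rmult_assoc, H0. field. lra.
Qed.

Lemma xy_dist h : pdist (ypt h) (xpt h) = c / 2.
Proof.
  unfold pdist, psub, xpt; cbn [fst snd].
  replace (fst (ypt h) - (fst (ypt h) + c / 2 * fst u2)) with ((- (c/2)) * fst u2) by ring.
  replace (snd (ypt h) - (snd (ypt h) + c / 2 * snd u2)) with ((- (c/2)) * snd u2) by ring.
  rewrite pnorm_scale. replace (fst u2, snd u2) with u2 by (destruct u2; auto). rewrite pnorm_u2. rewrite Rabs_left by lra. lra.
Qed.

Lemma seg_props h : 0 < h -> h * (1 + / sL) < c / 2 ->
  forall t, 0 <= t <= 1 -> G (seg (xpt h) (ypt h) t) /\ dG G (seg (xpt h) (ypt h) t) = h.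
Proof.
  intros Hh Hsm t Ht. pose proof sL_pos.
  set (z := seg (xpt h) (ypt h) t).
  set (k1 := h / pcross u2 u1). set (k2 := (1 - t) * (c / 2)).
  assert (Ex : fst (psub z v) = k1 * (fst u1 + fst u2) + k2 * fst u2).
  { unfold z, seg, xpt, ypt, psub, k1, k2; cbn [fst snd]. field. lra. }
  assert (Ey : snd (psub z v) = k1 * (snd u1 + snd u2) + k2 * snd u2).
  { unfold z, seg, xpt, ypt, psub, k1, k2; cbn [fst snd]. field. lra. }
  assert (Hd1 : pcross u2 (psub z v) = h).
  { transitivity (k1 * pcross u2 u1).
    unfold pcross at 1. rewrite Ex, Ey. unfold pcross. ring.
    unfold k1. field. lra. }
  assert (Hd2 : pcross (psub z v) u1 = h + (1 - t) * (c / 2) * pcross u2 u1).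
  { transitivity (k1 * pcross u2 u1 + k2 * pcross u2 u1).
    unfold pcross at 1. rewrite Ex, Ey. unfold pcross. ring.
    unfold k1, k2. field. lra. }
  assert (Hd2' : h <= pcross (psub z v) u1).
  { rewrite Hd2. assert (0 <= (1 - t) * (c/2) * pcross u2 u1).
    apply Rmult_le_pos; [apply Rmult_le_pos|]; lra. lra. }
  assert (Hzv : pdist z v <= c / 2 + h / sL).
  { pose proof (pdist_tri z (ypt h) v). rewrite ydist in H0 by auto.
    assert (pdist z (ypt h) <= c / 2).
    { unfold z. rewrite <- (seg1 (xpt h) (ypt h)) at 2. rewrite seg_dist.
      rewrite xy_dist. rewrite Rabs_left1 by lra. nra. }
    lra. }
  assert (Hhs : h / sL + h < c / 2).
  { replace (h / sL + h) with (h * (1 + / sL)) by (field; lra). auto. }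
  assert (Gz : G z) by (apply Htrunc; lra).
  split; auto. apply Rle_antisym.
  - rewrite <- Hd1. apply dG_le_d1; auto.
  - apply (dG_ge G z v h Gz v_notin). intros w Gw.
    assert (Hw : ~ (0 < pcross u2 (psub w v)) \/ ~ (0 < pcross (psub w v) u1) \/ ~ (pdist w v < c)).
    { apply NNPP. intros Hn. apply Gw. apply Htrunc; apply NNPP; intros Hk; apply Hn; tauto. }
    destruct Hw as [Hw|[Hw|Hw]].
    + pose proof (cross_le u2 (psub z w)). rewrite pnorm_u2 in H0.
      assert (pcross u2 (psub z w) = pcross u2 (psub z v) - pcross u2 (psub w v))
        by (unfold pcross, psub; cbn [fst snd]; ring).
      unfold pdist. lra.
    + pose proof (cross_le (psub z w) u1). rewrite pnorm_u1 in H0.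
      assert (pcross (psub z w) u1 = pcross (psub z v) u1 - pcross (psub w v) u1)
        by (unfold pcross, psub; cbn [fst snd]; ring).
      unfold pdist. lra.
    + pose proof (pdist_tri w z v). rewrite (pdist_sym w z) in H0. lra.
Qed.
Lemma local_main A : 1 <= A ->
  (forall x y, G x -> G y -> k_G G x y <= A * j_G G x y) -> 1 + / sL <= A.
Proof.
  intros HA1 Hadm. pose proof sL_pos as Hs.
  assert (HK : 0 < 1 + / sL) by (pose proof (Rinv_0_lt_compat _ Hs); lra).
  apply Rnot_lt_le. intros HAK.
  apply (asymp A (1 + / sL) (c / 2) (c / (2 * (1 + / sL)))); try lra.
  { apply Rdiv_lt_0_compat; lra. }
  intros h D0 Hh Hhh0 HD0.
  assert (Hsm : h * (1 + / sL) < c / 2).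
  { apply Rmult_lt_reg_r with (/ (1 + / sL)). apply Rinv_0_lt_compat; lra.
    replace (h * (1 + / sL) * / (1 + / sL)) with h by (field; lra).
    replace (c / 2 * / (1 + / sL)) with (c / (2 * (1 + / sL))) by (field; lra). auto. }
  pose proof (seg_props h Hh Hsm) as Hsp.
  destruct (Hsp 0 ltac:(lra)) as [Gx dx]. rewrite seg0 in Gx, dx.
  destruct (Hsp 1 ltac:(lra)) as [Gy dy]. rewrite seg1 in Gy, dy.
  pose proof (k_lower (xpt h) (ypt h) h D0 (segment_curve (xpt h) (ypt h) h Hh Hsp) Hh HD0 dx
                ltac:(rewrite ydist by auto; lra)) as Hk.
  rewrite xy_dist in Hk.
  specialize (Hadm _ _ Gx Gy).
  unfold j_G in Hadm. rewrite dx, dy, Rmin_left in Hadm by lra.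
  rewrite pdist_sym, xy_dist in Hadm. lra.
Qed.

End Local.
Lemma nxt_spec n i : (i < n)%nat -> ((i + 1 < n)%nat /\ nxt n i = (i + 1)%nat) \/ ((i + 1 = n)%nat /\ nxt n i = 0%nat).
Proof.
  intros Hi. unfold nxt. destruct (Nat.eq_dec (i + 1) n) as [E|E].
  - right. split; auto. rewrite E. apply Nat.Div0.mod_same.
  - left. split. lia. apply Nat.mod_small. lia.
Qed.

Lemma prv_spec n i : (i < n)%nat -> (i = 0%nat /\ prv n i = (n - 1)%nat) \/ ((0 < i)%nat /\ prv n i = (i - 1)%nat).
Proof.
  intros Hi. unfold prv. destruct i as [|i].
  - left. split; auto. apply Nat.mod_small. lia.
  - right. split. lia. replace (S i + n - 1)%nat with (i + 1 * n)%nat by lia.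
    rewrite Nat.Div0.mod_add. rewrite Nat.mod_small; lia.
Qed.

Lemma fin_min (n : nat) (P : nat -> Prop) (f : nat -> R) :
  (forall j, (j < n)%nat -> P j -> 0 < f j) ->
  exists c, 0 < c /\ forall j, (j < n)%nat -> P j -> c <= f j.
Proof.
  induction n; intros H.
  - exists 1. split; [lra|]. intros; lia.
  - destruct IHn as [c [Hc Hc2]]. intros; apply H; auto; lia.
    destruct (classic (P n)) as [Pn|Pn].
    + exists (Rmin c (f n)). split. apply Rmin_case; [auto|apply H; auto].
      intros j Hj Pj. destruct (Nat.eq_dec j n) as [->|]. apply Rmin_r.
      eapply Rle_trans; [apply Rmin_l|]. apply Hc2; auto; lia.
    + exists c. split; auto. intros j Hj Pj. destruct (Nat.eq_dec j n) as [->|]. contradiction.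
      apply Hc2; auto; lia.
Qed.

Lemma pnorm_zero p : pnorm p = 0 -> fst p = 0 /\ snd p = 0.
Proof. intros H. pose proof (pnorm_sq p). rewrite H in H0. simpl in H0. split; nra. Qed.

Definition unitv (p : pt) : pt := (/ pnorm p * fst p, / pnorm p * snd p).

Lemma unitv_sq p : pnorm p <> 0 -> fst (unitv p) ^ 2 + snd (unitv p) ^ 2 = 1.
Proof.
  intros H. pose proof (pnorm_sq p). unfold unitv; simpl.
  replace (/ pnorm p * fst p * (/ pnorm p * fst p * 1) + / pnorm p * snd p * (/ pnorm p * snd p * 1))
    with ((fst p * (fst p * 1) + snd p * (snd p * 1)) / (pnorm p * pnorm p)) by (field; auto).
  simpl in H0. rewrite <- H0. field. auto.
Qed.

Lemma cross_unitv_l p q : pnorm p <> 0 -> pcross p q = pnorm p * pcross (unitv p) q.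
Proof. intros H. unfold pcross, unitv; simpl. field. auto. Qed.
Lemma cross_unitv_r p q : pnorm q <> 0 -> pcross p q = pnorm q * pcross p (unitv q).
Proof. intros H. unfold pcross, unitv; simpl. field. auto. Qed.
Lemma vert_notin n v i : (i < n)%nat -> ~ poly_domain n v (v i).
Proof.
  intros Hi H. specialize (H i Hi). unfold pcross, psub in H; simpl in H.
  replace (fst (v (nxt n i)) - fst (v i)) with (fst (v (nxt n i)) - fst (v i)) in H by ring. lra.
Qed.

Lemma cross_lower e p q : pcross e (psub p q) >= - (pnorm e * pdist p q).
Proof.
  pose proof (cross_le e (psub q p)).
  assert (pcross e (psub q p) = - pcross e (psub p q)) by (unfold pcross, psub; simpl; ring).
  rewrite (pdist_sym p q). unfold pdist. lra.
Qed.

Lemma poly_dG_pos n v z : (0 < n)%nat -> poly_domain n v z -> 0 < dG (poly_domain n v) z.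
Proof.
  intros Hn Gz.
  set (e := fun j => psub (v (nxt n j)) (v j)).
  assert (He : forall j, (j < n)%nat -> 0 < pnorm (e j)).
  { intros j Hj. destruct (Req_dec (pnorm (e j)) 0) as [E|E].
    - apply pnorm_zero in E. specialize (Gz j Hj). fold (e j) in Gz. unfold pcross in Gz.
      destruct E as [E1 E2]. rewrite E1, E2 in Gz. lra.
    - pose proof (pnorm_ge0 (e j)). lra. }
  destruct (fin_min n (fun _ => True) (fun j => pcross (e j) (psub z (v j)) / pnorm (e j))) as [m [Hm Hm2]].
  { intros j Hj _. apply Rdiv_lt_0_compat; auto. apply Gz; auto. }
  apply Rlt_le_trans with m; auto.
  apply (dG_ge _ z (v O) m Gz (vert_notin n v O Hn)).
  intros w Gw.
  assert (Hex : exists j, (j < n)%nat /\ ~ (0 < pcross (e j) (psub w (v j)))).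
  { apply NNPP. intros Hne. apply Gw. intros j Hj. apply NNPP. intros Hk. apply Hne. eauto. }
  destruct Hex as [j [Hj Hw]].
  specialize (Hm2 j Hj I). simpl in Hm2. specialize (He j Hj).
  pose proof (cross_le (e j) (psub z w)).
  assert (pcross (e j) (psub z w) = pcross (e j) (psub z (v j)) - pcross (e j) (psub w (v j)))
    by (unfold pcross, psub; simpl; ring).
  assert (m * pnorm (e j) <= pcross (e j) (psub z (v j))).
  { apply Rmult_le_reg_r with (/ pnorm (e j)). apply Rinv_0_lt_compat; auto.
    rewrite Rmult_assoc, Rinv_r by lra. rewrite Rmult_1_r. auto. }
  unfold pdist. apply Rmult_le_reg_r with (pnorm (e j)); auto. nra.
Qed.
Theorem theorem1p8 (n : nat) (v : nat -> pt) (alpha : R) :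
  convex_polygon n v ->
  smallest_inner_angle n v alpha ->
  forall A, uniformity_admissible (poly_domain n v) A ->
  1 + / sin (alpha / 2) <= A.
Proof.
  intros [Hn3 Hcv] [[i0 [Hi0 Halpha]] _] A [HA1 Hadm].
  set (G := poly_domain n v).
  set (V := v i0). set (a := v (prv n i0)). set (b := v (nxt n i0)).
  assert (Hprv : (prv n i0 < n)%nat) by (destruct (prv_spec n i0 Hi0) as [[? ->]|[? ->]]; lia).
  assert (Hnxt : (nxt n i0 < n)%nat) by (destruct (nxt_spec n i0 Hi0) as [[? ->]|[? ->]]; lia).
  assert (Hnp : nxt n (prv n i0) = i0).
  { destruct (prv_spec n i0 Hi0) as [[E1 E2]|[E1 E2]]; rewrite E2.
    - destruct (nxt_spec n (n - 1) ltac:(lia)) as [[F1 F2]|[F1 F2]]; lia.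
    - destruct (nxt_spec n (i0 - 1) ltac:(lia)) as [[F1 F2]|[F1 F2]]; lia. }
  assert (Hpn : forall j, (j < n)%nat -> nxt n j = i0 -> j = prv n i0).
  { intros j Hj E. destruct (nxt_spec n j Hj) as [[F1 F2]|[F1 F2]];
    destruct (prv_spec n i0 Hi0) as [[E1 E2]|[E1 E2]]; lia. }
  assert (Hab : 0 < pcross (psub b V) (psub a V)).
  { apply Hcv; auto.
    - destruct (prv_spec n i0 Hi0) as [[E1 E2]|[E1 E2]]; lia.
    - destruct (prv_spec n i0 Hi0) as [[E1 E2]|[E1 E2]];
      destruct (nxt_spec n i0 Hi0) as [[F1 F2]|[F1 F2]]; lia. }
  set (pa := psub a V). set (pb := psub b V). fold pa pb in Hab.
  assert (Hna : 0 < pnorm pa).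
  { destruct (Req_dec (pnorm pa) 0) as [E|E].
    - apply pnorm_zero in E. unfold pcross in Hab. destruct E as [E1 E2]. rewrite E1, E2 in Hab. lra.
    - pose proof (pnorm_ge0 pa). lra. }
  assert (Hnb : 0 < pnorm pb).
  { destruct (Req_dec (pnorm pb) 0) as [E|E].
    - apply pnorm_zero in E. unfold pcross in Hab. destruct E as [E1 E2]. rewrite E1, E2 in Hab. lra.
    - pose proof (pnorm_ge0 pb). lra. }
  set (u1 := unitv pa). set (u2 := unitv pb).
  assert (Hu1 : fst u1 ^ 2 + snd u1 ^ 2 = 1) by (apply unitv_sq; lra).
  assert (Hu2 : fst u2 ^ 2 + snd u2 ^ 2 = 1) by (apply unitv_sq; lra).
  assert (Hcr : forall p, pcross pb p = pnorm pb * pcross u2 p) by (intros; apply cross_unitv_l; lra).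
  assert (Hcr2 : forall p, pcross p pa = pnorm pa * pcross p u1) by (intros; apply cross_unitv_r; lra).
  assert (Hsig : 0 < pcross u2 u1).
  { rewrite Hcr, Hcr2 in Hab. apply Rmult_lt_reg_l with (pnorm pb); auto.
    apply Rmult_lt_reg_l with (pnorm pa); auto. lra. }
  assert (Hc1 : forall z, pcross (psub (v (nxt n i0)) (v i0)) (psub z (v i0)) = pnorm pb * pcross u2 (psub z V)).
  { intros z. rewrite <- Hcr. auto. }
  assert (Hc2 : forall z, pcross (psub (v (nxt n (prv n i0))) (v (prv n i0))) (psub z (v (prv n i0)))
                          = pnorm pa * pcross (psub z V) u1).
  { intros z. rewrite Hnp, <- Hcr2. fold V a. unfold pa, pcross, psub; simpl; ring. }
  assert (Hwedge : forall z, G z -> 0 < pcross u2 (psub z V) /\ 0 < pcross (psub z V) u1).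
  { intros z Gz. split.
    - pose proof (Gz i0 Hi0). rewrite Hc1 in H. apply Rmult_lt_reg_l with (pnorm pb); auto. lra.
    - pose proof (Gz (prv n i0) Hprv). rewrite Hc2 in H. apply Rmult_lt_reg_l with (pnorm pa); auto. lra. }
  assert (Hpos : forall z, G z -> 0 < dG G z) by (intros; apply poly_dG_pos; auto; lia).
  set (e := fun j => psub (v (nxt n j)) (v j)).
  destruct (fin_min n (fun j => j <> i0 /\ nxt n j <> i0)
              (fun j => pcross (e j) (psub V (v j)) / (pnorm (e j) + 1))) as [c [Hc Hcm]].
  { intros j Hj [P1 P2]. apply Rdiv_lt_0_compat. apply Hcv; auto.
    pose proof (pnorm_ge0 (e j)). lra. }
  assert (Htrunc : forall z, 0 < pcross u2 (psub z V) -> 0 < pcross (psub z V) u1 -> pdist z V < c -> G z).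
  { intros z D1 D2 Dz j Hj.
    destruct (Nat.eq_dec j i0) as [->|Ej].
    - rewrite Hc1. apply Rmult_lt_0_compat; auto.
    - destruct (Nat.eq_dec (nxt n j) i0) as [Nj|Nj].
      + pose proof (Hpn j Hj Nj). subst j. rewrite Hc2. apply Rmult_lt_0_compat; auto.
      + specialize (Hcm j Hj (conj Ej Nj)). simpl in Hcm. fold (e j).
        set (q := pcross (e j) (psub V (v j))) in *.
        assert (Hq : 0 < q) by (apply Hcv; auto).
        set (E := pnorm (e j)) in *. assert (HE : 0 <= E) by apply pnorm_ge0.
        assert (Hcq : c * (E + 1) <= q).
        { apply Rmult_le_reg_r with (/ (E + 1)). apply Rinv_0_lt_compat; lra.
          rewrite Rmult_assoc, Rinv_r, Rmult_1_r by lra. auto. }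
        pose proof (cross_lower (e j) z V). fold E in H.
        assert (pcross (e j) (psub z (v j)) = q + pcross (e j) (psub z V))
          by (unfold q, pcross, psub; simpl; ring).
        assert (E * pdist z V <= E * c) by (apply Rmult_le_compat_l; lra).
        nra. }
  pose proof (local_main G V u1 u2 Hu1 Hu2 Hsig Hwedge Hpos c Hc Htrunc A HA1 Hadm) as Hmain.
  assert (Hs : sL u1 u2 = sin (alpha / 2)).
  { set (cc := pdot u1 u2).
    assert (Hcc : pdot pa pb / (pnorm pa * pnorm pb) = cc).
    { unfold cc, u1, u2, unitv, pdot; simpl. field. lra. }
    assert (Hal : alpha = acos cc).
    { rewrite Halpha. unfold inner_angle. fold V a b pa pb. rewrite Hcc. auto. }
    assert (Hlag : cc ^ 2 + pcross u1 u2 ^ 2 = 1).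
    { unfold cc, pdot, pcross. transitivity ((fst u1 ^ 2 + snd u1 ^ 2) * (fst u2 ^ 2 + snd u2 ^ 2)).
      ring. rewrite Hu1, Hu2. ring. }
    assert (Hccb : -1 <= cc <= 1) by (split; nra).
    assert (Hcos : cos alpha = cc) by (rewrite Hal; apply cos_acos; auto).
    assert (Hsin2 : sin (alpha / 2) * sin (alpha / 2) = (1 - cc) / 2).
    { pose proof (cos_2a_sin (alpha / 2)). replace (2 * (alpha / 2)) with alpha in H by field. lra. }
    assert (Hsl2 : sL u1 u2 * sL u1 u2 = (1 - cc) / 2).
    { unfold sL. pose proof (pnorm_sq (psub u1 u2)).
      replace (pnorm (psub u1 u2) / 2 * (pnorm (psub u1 u2) / 2)) with (pnorm (psub u1 u2) * pnorm (psub u1 u2) / 4) by field.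
      rewrite H. unfold cc, pdot, psub; simpl. simpl in Hu1, Hu2. nra. }
    assert (Hsg : 0 <= sin (alpha / 2)).
    { pose proof (acos_bound cc). rewrite <- Hal in H. pose proof PI_RGT_0. apply sin_ge_0; lra. }
    assert (Hsl : 0 <= sL u1 u2) by (unfold sL; pose proof (pnorm_ge0 (psub u1 u2)); lra).
    nra. }
  rewrite <- Hs. auto.
Qed.
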